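(* Let $n\geq 3$, $a>1$, $p,q\in\mathbb{R}$, and let $f_t(x)$, $x\in[1,a]$, solve $$\dot f=u''(x)\left(\frac{f''}{1+f'^2}+(n-1)\frac{xf'-f}{x^2+f^2}\right),\qquad f_t(1)=q,\ f_t(a)=p,$$ where $f_0$ satisfies the supercritical phase assumption $(n-1)\arctan\left(\frac{f_0}{x}\right)+\arctan(f_0')>(n-2)\frac{\pi}{2}$. Then $f_t(x)>0$ for all $t\geq 0$ for which the flow is defined.
   Context: This is the line bundle mean curvature flow on the blowup of $\mathbb{P}^n$ at a point under Calabi symmetry, written in the Legendre coordinate $x\in[1,a]$: $u''$ is the smooth function of $x$ coming from the Calabi-symmetric K\''ahler form $\omega=i\partial\bar\partial u$ in $a[H]-[E]$ (positive on $(1,a)$, vanishing at the endpoints), and $f$ encodes a Calabi-symmetric form $\alpha_t$ in $p[H]-q[E]$ whose eigenvalues relative to $\omega$ are $f/x$ (multiplicity $n-1$) and $f'$, so its angle is $\Theta=(n-1)\arctan(f/x)+\arctan(f')$. The supercritical phase condition $\Theta>(n-2)\frac\pi2$ is preserved along the flow. *)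

(* Defs.v *)
From Stdlib Require Import Reals.
From Coquelicot Require Import Coquelicot.
Open Scope R_scope.

Definition smooth_fun (phi : R -> R) : Prop :=
  exists d : nat -> R -> R, d O = phi /\
    forall (k : nat) (x : R), is_derive (d k) x (d (S k) x).

(* f : R -> R -> R, (t, x) |-> f t x, is jointly C^infinity on the open
   half-plane { t < T } (which contains [0,T) x [1,a]): all mixed partial
   derivatives g i j = d_t^i d_x^j f exist there and are jointly continuous. *)
Definition smooth_before (T : Rbar) (f : R -> R -> R) : Prop :=
  exists g : nat -> nat -> R -> R -> R, g O O = f /\
    forall (i j : nat) (t x : R), Rbar_lt t T ->
      is_derive (fun s => g i j s x) t (g (S i) j t x) /\
      is_derive (g i j t) x (g i (S j) t x) /\
      continuous (fun z : R * R => g i j (fst z) (snd z)) (t, x).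

Definition Theta (n : nat) (f : R -> R) (x : R) : R :=
  (INR n - 1) * atan (f x / x) + atan (Derive f x).

(* Right-hand side of the line bundle MCF under Calabi symmetry. *)
Definition lbmcf_rhs (n : nat) (upp : R -> R) (f : R -> R) (x : R) : R :=
  upp x * ( Derive_n f 2 x / (1 + (Derive f x) ^ 2)
          + (INR n - 1) * (x * Derive f x - f x) / (x ^ 2 + (f x) ^ 2) ).

(* Main.v *)
Require Import Defs.
From Stdlib Require Import Reals Lra.
From Coquelicot Require Import Coquelicot.
Open Scope R_scope.

Lemma deriv_left_min (h : R -> R) c l r : is_derive h c l -> 0 < r ->
  (forall y, c - r < y < c -> h c <= h y) -> l <= 0.
Proof.
intros Hd Hr Hm. apply is_derive_Reals in Hd.
destruct (Rle_or_lt l 0) as [H|H]; [exact H|exfalso].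
destruct (Hd l H) as [del Hdel].
set (hh := - Rmin del r / 2).
assert (Hm1 : Rmin del r <= del) by apply Rmin_l.
assert (Hm2 : Rmin del r <= r) by apply Rmin_r.
assert (Hm3 : 0 < Rmin del r) by (apply Rmin_pos; [apply cond_pos|exact Hr]).
assert (Hh0 : hh < 0) by (unfold hh; lra).
assert (Hq := Hdel hh ltac:(lra) ltac:(rewrite Rabs_left; unfold hh; lra)).
assert (Hy := Hm (c + hh) ltac:(unfold hh; lra)).
set (q := (h (c + hh) - h c) / hh) in *.
assert (q * hh = h (c + hh) - h c) by (unfold q; field; lra).
apply Rabs_def2 in Hq. nra.
Qed.

Lemma deriv_right_min (h : R -> R) c l r : is_derive h c l -> 0 < r ->
  (forall y, c < y < c + r -> h c <= h y) -> 0 <= l.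
Proof.
intros Hd Hr Hm. apply is_derive_Reals in Hd.
destruct (Rle_or_lt 0 l) as [H|H]; [exact H|exfalso].
destruct (Hd (- l) ltac:(lra)) as [del Hdel].
set (hh := Rmin del r / 2).
assert (Hm1 : Rmin del r <= del) by apply Rmin_l.
assert (Hm2 : Rmin del r <= r) by apply Rmin_r.
assert (Hm3 : 0 < Rmin del r) by (apply Rmin_pos; [apply cond_pos|exact Hr]).
assert (Hh0 : 0 < hh) by (unfold hh; lra).
assert (Hq := Hdel hh ltac:(lra) ltac:(rewrite Rabs_right; unfold hh; lra)).
assert (Hy := Hm (c + hh) ltac:(unfold hh; lra)).
set (q := (h (c + hh) - h c) / hh) in *.
assert (q * hh = h (c + hh) - h c) by (unfold q; field; lra).
apply Rabs_def2 in Hq. nra.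
Qed.

Lemma second_deriv_min (h dh : R -> R) c l2 r :
  (forall y, is_derive h y (dh y)) -> is_derive dh c l2 -> dh c = 0 -> 0 < r ->
  (forall y, c < y < c + r -> h c <= h y) -> 0 <= l2.
Proof.
intros Hh Hd Hdc Hr Hm. apply is_derive_Reals in Hd.
destruct (Rle_or_lt 0 l2) as [H|H]; [exact H|exfalso].
destruct (Hd (- l2) ltac:(lra)) as [del Hdel].
assert (Hm1 : Rmin del r <= del) by apply Rmin_l.
assert (Hm2 : Rmin del r <= r) by apply Rmin_r.
assert (Hm3 : 0 < Rmin del r) by (apply Rmin_pos; [apply cond_pos|exact Hr]).
set (y := c + Rmin del r / 2).
assert (Hneg : forall z, c < z <= y -> dh z < 0).
{ intros z Hz. assert (Hq := Hdel (z - c) ltac:(lra)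
     ltac:(rewrite Rabs_right; unfold y in Hz; lra)).
  replace (c + (z - c)) with z in Hq by ring. rewrite Hdc in Hq.
  apply Rabs_def2 in Hq.
  set (q := (dh z - 0) / (z - c)) in *.
  assert (q * (z - c) = dh z) by (unfold q; field; lra). nra. }
destruct (MVT_cor2 h dh c y ltac:(unfold y; lra)) as [xi [Hxi1 Hxi2]].
{ intros z _. apply is_derive_Reals, Hh. }
assert (dh xi < 0) by (apply Hneg; lra).
assert (Hy := Hm y ltac:(unfold y; lra)).
assert (y - c > 0) by (unfold y; lra). nra.
Qed.

Lemma cont_ed (G : R * R -> R) t x : continuous G (t, x) ->
  forall eps, 0 < eps -> exists d, 0 < d /\ forall s y,
    Rabs (s - t) < d -> Rabs (y - x) < d -> Rabs (G (s, y) - G (t, x)) < eps.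
Proof.
intros H eps He.
destruct (proj1 (filterlim_locally _ _) H (mkposreal eps He)) as [d Hd].
exists d; split; [apply cond_pos|].
intros s y H1 H2. apply (Hd (s, y)). split; assumption.
Qed.

Lemma cont_ed1 (G : R -> R) t : continuous G t ->
  forall eps, 0 < eps -> exists d, 0 < d /\ forall s,
    Rabs (s - t) < d -> Rabs (G s - G t) < eps.
Proof.
intros H eps He.
destruct (proj1 (filterlim_locally _ _) H (mkposreal eps He)) as [d Hd].
exists d; split; [apply cond_pos|].
intros s H1. apply (Hd s). assumption.
Qed.

Lemma rbar_lt_le (s t : R) (T : Rbar) : s <= t -> Rbar_lt t T -> Rbar_lt s T.
Proof. destruct T; simpl; intros; lra. Qed.
Module EVT.
From mathcomp Require Import all_boot all_order all_algebra.
From mathcomp Require Import all_classical all_reals all_analysis.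
From mathcomp Require Import Rstruct Rstruct_topology.
Import Order.TTheory GRing.Theory Num.Theory.
Import numFieldNormedType.Exports.
Local Open Scope classical_set_scope.
Local Open Scope ring_scope.

Lemma evt2 (F : R -> R -> R) (t1 a b : R) : Rle 0 t1 -> Rle a b ->
 (forall t x, Rle 0 t -> Rle t t1 -> Rle a x -> Rle x b -> forall eps, Rlt 0 eps ->
    exists d, Rlt 0 d /\ forall s y, Rlt (Rabs (Rminus s t)) d -> Rlt (Rabs (Rminus y x)) d ->
       Rlt (Rabs (Rminus (F s y) (F t x))) eps) ->
 exists t0 x0, (Rle 0 t0 /\ Rle t0 t1) /\ (Rle a x0 /\ Rle x0 b) /\
   forall t x, Rle 0 t -> Rle t t1 -> Rle a x -> Rle x b -> Rle (F t0 x0) (F t x).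
Proof.
move=> /RleP t10 /RleP ab HF.
pose A : set (R * R) := `[0, t1] `*` `[a, b].
pose G := fun z : R * R => F z.1 z.2.
have cA : compact A by apply: compact_setX; apply: segment_compact.
have A0 : A !=set0 by exists (0, a); split => /=; rewrite in_itv /= lexx.
have cG : {within A, continuous G}.
  apply: continuous_in_subspaceT => -[t x]; rewrite inE => -[] /=.
  rewrite !in_itv /= => /andP[/RleP h1 /RleP h2] /andP[/RleP h3 /RleP h4].
  apply/(@cvg_ballP R) => e /RltP e0.
  have [d [/RltP d0 Hd]] := HF t x h1 h2 h3 h4 e e0.
  exists (ball t d, ball x d).
    split => /=; apply: (@nbhsx_ballx _ R); exact d0.
  move=> -[s y] [] /= B1 B2.
  move: B1 B2; rewrite /ball /= => /RltP B1 /RltP B2.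
  apply/RltP.
  have E : forall r : R, `|r| = Rabs r by [].
  have E2 : forall r1 r2 : R, r1 - r2 = Rminus r1 r2 by [].
  rewrite !E !E2 in B1 B2 *.
  rewrite Rabs_minus_sym; apply: Hd; rewrite Rabs_minus_sym; [exact B1 | exact B2].
have [[t0 x0] + Hmin] := compact_EVT_min A0 cA cG.
rewrite inE => -[] /=; rewrite !in_itv /= => /andP[/RleP h1 /RleP h2] /andP[/RleP h3 /RleP h4].
exists t0, x0; split; [by [] | split; [by [] |]].
move=> t x /RleP g1 /RleP g2 /RleP g3 /RleP g4; apply/RleP.
apply: (Hmin (t, x)); rewrite inE; split; rewrite /= in_itv /=; apply/andP; split => //.
Qed.
End EVT.
Import EVT.
Lemma main_part (n : nat) (a p q : R) (upp : R -> R) (T : Rbar)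
  (f : R -> R -> R) :
  (3 <= n)%nat ->
  1 < a ->
  smooth_fun upp ->
  upp 1 = 0 -> upp a = 0 ->
  (forall x, 1 < x < a -> 0 < upp x) ->
  Rbar_lt 0 T ->
  smooth_before T f ->
  (forall t x, 0 < t -> Rbar_lt t T -> 1 < x < a ->
     Derive (fun s => f s x) t = lbmcf_rhs n upp (f t) x) ->
  (forall t, 0 <= t -> Rbar_lt t T -> f t 1 = q /\ f t a = p) ->
  (forall x, 1 <= x <= a -> Theta n (f 0) x > (INR n - 2) * (PI / 2)) ->
  forall t x, 0 <= t -> Rbar_lt t T -> 1 <= x <= a -> 0 < f t x.
Proof.
intros Hn Ha Hupp Hu1 Hua Hupos HT0 Hsm Heq Hbd Hphase t x Ht0 HtT Hx.
destruct Hsm as [g [Hg00 Hg]]. subst f.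
set (f := g O O) in *.
assert (HN : 3 <= INR n) by (replace 3 with (INR 3) by (simpl; ring); apply le_INR; exact Hn).
assert (pos0 : forall y, 1 <= y <= a -> 0 < f 0 y).
{ intros y Hy. specialize (Hphase y Hy). unfold Theta in Hphase.
  set (u := f 0 y / y) in *.
  destruct (atan_bound (Derive (f 0) y)) as [_ Hb].
  assert (HPI := PI_RGT_0).
  assert (Hat : 0 < atan u).
  { destruct (Rle_or_lt (atan u) 0) as [H|H]; [|exact H]. nra. }
  assert (Hu : 0 < u).
  { destruct (Rle_or_lt u 0) as [H|H]; [|exact H].
    destruct (Rle_lt_or_eq_dec _ _ H) as [H'|H'].
    - apply atan_increasing in H'. rewrite atan_0 in H'. lra.
    - rewrite H', atan_0 in Hat. lra. }
  assert (f 0 y = u * y) by (unfold u; field; lra). nra. }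
assert (Hlt : forall s, s <= t -> Rbar_lt s T) by (intros s Hs; exact (rbar_lt_le s t T Hs HtT)).
assert (Hgx : forall i j s y, s <= t -> is_derive (g i j s) y (g i (S j) s y)).
{ intros i j s y Hs. apply (Hg i j s y (Hlt s Hs)). }
assert (Hgt : forall i j s y, s <= t -> is_derive (fun s => g i j s y) s (g (S i) j s y)).
{ intros i j s y Hs. apply (Hg i j s y (Hlt s Hs)). }
destruct (continuity_ab_min (f 0) 1 a ltac:(lra)) as [mx [Hmx Hmxr]].
{ intros c _. apply continuity_pt_filterlim.
  apply (@ex_derive_continuous R_AbsRing R_NormedModule (f 0) c).
  eexists. apply (Hgx O O 0 c Ht0). }
set (del := f 0 mx).
assert (Hdel : 0 < del) by (apply pos0; exact Hmxr).
destruct Hupp as [d [Hd0 Hd]].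
destruct (continuity_ab_maj upp 1 a ltac:(lra)) as [Mx [HMx HMxr]].
{ intros c _. apply continuity_pt_filterlim.
  apply (@ex_derive_continuous R_AbsRing R_NormedModule upp c).
  eexists. rewrite <- Hd0. apply Hd. }
set (M := Rabs (upp Mx)).
assert (HM : forall y, 1 <= y <= a -> upp y <= M).
{ intros y Hy. apply Rle_trans with (upp Mx). apply HMx; exact Hy. apply Rle_abs. }
assert (HM0 : 0 <= M) by apply Rabs_pos.
set (N := INR n - 1).
set (C := M * N + 1).
assert (HC : 0 < C) by (unfold C, N; nra).
set (F := fun s y => f s y - del * exp (- C * s)).
destruct (evt2 F t 1 a Ht0 ltac:(lra)) as [t0 [x0 [[Ht01 Ht02] [[Hx01 Hx02] Hmin]]]].
{ intros s y Hs1 Hs2 Hy1 Hy2 eps Heps.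
  destruct (cont_ed (fun z => f (fst z) (snd z)) s y
     (proj2 (proj2 (Hg O O s y (Hlt s Hs2)))) (eps / 2) ltac:(lra)) as [d1 [Hd1 H1]].
  assert (Hce : continuous (fun s => del * exp (- C * s)) s).
  { apply (@ex_derive_continuous R_AbsRing R_NormedModule (fun s => del * exp (- C * s)) s).
    auto_derive. exact I. }
  destruct (cont_ed1 _ s Hce (eps / 2) ltac:(lra)) as [d2 [Hd2 H2]].
  exists (Rmin d1 d2). split. apply Rmin_pos; assumption.
  intros s' y' Hs' Hy'.
  assert (Rmin d1 d2 <= d1) by apply Rmin_l.
  assert (Rmin d1 d2 <= d2) by apply Rmin_r.
  specialize (H1 s' y' ltac:(lra) ltac:(lra)). specialize (H2 s' ltac:(lra)).
  simpl in H1. unfold F.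
  apply Rabs_def2 in H1. apply Rabs_def2 in H2. apply Rabs_def1; lra. }
assert (HFt0 : 0 <= F t0 x0).
{ destruct (Rle_or_lt 0 (F t0 x0)) as [H|Hneg]; [exact H|exfalso].
  set (E := exp (- C * t0)).
  assert (HE0 : 0 < E) by apply exp_pos.
  assert (HE1 : E <= 1).
  { unfold E. rewrite <- exp_0. destruct (Rle_lt_or_eq_dec (- C * t0) 0 ltac:(nra)) as [H|H].
    - left. apply exp_increasing. exact H.
    - rewrite H. lra. }
  assert (Hq : q >= del).
  { destruct (Hbd 0 ltac:(lra) (Hlt 0 Ht0)) as [H _]. fold f in H. rewrite <- H.
    apply Rle_ge, Hmx; lra. }
  assert (Hp : p >= del).
  { destruct (Hbd 0 ltac:(lra) (Hlt 0 Ht0)) as [_ H]. fold f in H. rewrite <- H.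
    apply Rle_ge, Hmx; lra. }
  assert (Htpos : 0 < t0).
  { destruct (Rle_lt_or_eq_dec 0 t0 Ht01) as [H|H]; [exact H|].
    subst t0. unfold F in Hneg. rewrite Rmult_0_r, exp_0 in Hneg.
    assert (del <= f 0 x0) by (apply Hmx; lra). lra. }
  destruct (Hbd t0 Ht01 (Hlt t0 Ht02)) as [Hb1 Hba]. fold f in Hb1, Hba.
  assert (Hxint : 1 < x0 < a).
  { split.
    - destruct (Rle_lt_or_eq_dec 1 x0 Hx01) as [H|H]; [exact H|].
      subst x0. unfold F in Hneg. fold E in Hneg. rewrite Hb1 in Hneg. nra.
    - destruct (Rle_lt_or_eq_dec x0 a Hx02) as [H|H]; [exact H|].
      subst x0. unfold F in Hneg. fold E in Hneg. rewrite Hba in Hneg. nra. }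
  set (v := f t0 x0).
  assert (Hv : v < del * E) by (unfold F in Hneg; fold E in Hneg; unfold v; lra).
  assert (Hdt : is_derive (fun s => F s x0) t0 (g 1%nat O t0 x0 + del * C * E)).
  { unfold F. apply (is_derive_ext (fun s => f s x0 - del * exp (- C * s))); [reflexivity|].
    replace (g 1%nat O t0 x0 + del * C * E) with (g 1%nat O t0 x0 - (del * (exp (- C * t0) * (- C * 1)))) by (unfold E; ring).
    apply (is_derive_minus (fun s => f s x0) (fun s => del * exp (- C * s))).
    - apply (Hgt O O t0 x0 Ht02).
    - auto_derive; [exact I | ring]. }
  assert (Ht_le : g 1%nat O t0 x0 + del * C * E <= 0).
  { apply (deriv_left_min (fun s => F s x0) t0 _ t0 Hdt Htpos).
    intros s Hs. apply Hmin; lra. }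
  set (r := Rmin (x0 - 1) (a - x0)).
  assert (Hr : 0 < r) by (apply Rmin_pos; lra).
  assert (Hr1 : r <= x0 - 1) by apply Rmin_l.
  assert (Hr2 : r <= a - x0) by apply Rmin_r.
  assert (Hsp : forall y, 1 <= y <= a -> f t0 x0 <= f t0 y).
  { intros y Hy. assert (H := Hmin t0 y Ht01 Ht02 (proj1 Hy) (proj2 Hy)). unfold F in H. lra. }
  assert (Hx1 : forall y, is_derive (f t0) y (g O 1%nat t0 y)) by (intros y; apply (Hgx O O t0 y Ht02)).
  assert (Hx2 : is_derive (g O 1%nat t0) x0 (g O 2%nat t0 x0)) by apply (Hgx O 1%nat t0 x0 Ht02).
  assert (Hd1a : g O 1%nat t0 x0 <= 0).
  { apply (deriv_left_min (f t0) x0 _ r (Hx1 x0) Hr). intros y Hy. apply Hsp; lra. }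
  assert (Hd1b : 0 <= g O 1%nat t0 x0).
  { apply (deriv_right_min (f t0) x0 _ r (Hx1 x0) Hr). intros y Hy. apply Hsp; lra. }
  assert (Hd1 : g O 1%nat t0 x0 = 0) by lra.
  assert (Hd2 : 0 <= g O 2%nat t0 x0).
  { apply (second_deriv_min (f t0) (g O 1%nat t0) x0 _ r Hx1 Hx2 Hd1 Hr).
    intros y Hy. apply Hsp; lra. }
  specialize (Heq t0 x0 Htpos (Hlt t0 Ht02) Hxint).
  assert (HDt : Derive (fun s => f s x0) t0 = g 1%nat O t0 x0) by (apply is_derive_unique, (Hgt O O t0 x0 Ht02)).
  rewrite HDt in Heq.
  unfold lbmcf_rhs in Heq.
  assert (HD1 : forall y, Derive (f t0) y = (g O 1%nat t0 y)) by (intros y; apply is_derive_unique, Hx1).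
  assert (HD2 : Derive_n (f t0) 2 x0 = (g O 2%nat t0 x0)).
  { simpl. rewrite (Derive_ext (fun x1 => Derive (fun x2 => f t0 x2) x1) _ x0 HD1). apply is_derive_unique, Hx2. }
  rewrite HD2, HD1, Hd1 in Heq. fold v N in Heq.
  replace (x0 * 0 - v) with (- v) in Heq by ring.
  replace (1 + 0 ^ 2) with 1 in Heq by ring.
  assert (Hup := Hupos x0 Hxint).
  assert (HuM := HM x0 ltac:(lra)).
  assert (HN1 : 0 < N) by (unfold N; lra).
  set (w := v / (x0 ^ 2 + v ^ 2)).
  assert (Hden : 1 <= x0 ^ 2 + v ^ 2) by nra.
  replace (N * - v / (x0 ^ 2 + v ^ 2)) with (- N * w) in Heq by (unfold w; field; lra).
  replace (g O 2%nat t0 x0 / 1) with (g O 2%nat t0 x0) in Heq by field.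
  set (g10 := g 1%nat O t0 x0) in *. set (g02 := g O 2%nat t0 x0) in *.
  assert (HCE : 0 < del * C * E) by (apply Rmult_lt_0_compat; [apply Rmult_lt_0_compat|]; assumption).
  assert (Hw : w * (x0 ^ 2 + v ^ 2) = v) by (unfold w; field; lra).
  assert (H1 : 0 <= upp x0 * g02) by (apply Rmult_le_pos; lra).
  destruct (Rle_or_lt v 0) as [Hv0|Hv0].
  - assert (Hw0 : w <= 0) by nra.
    assert (0 <= upp x0 * (- N * w)) by (apply Rmult_le_pos; nra).
    nra.
  - assert (Hw0 : 0 < w) by nra.
    assert (Hwv : w <= v) by nra.
    assert (H2 : upp x0 * (N * w) <= M * (N * v)).
    { apply Rmult_le_compat; nra. }
    assert (H3 : C * v < C * (del * E)) by (apply Rmult_lt_compat_l; lra).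
    assert (Heq' : g10 = upp x0 * g02 - upp x0 * (N * w)) by (rewrite Heq; ring).
    assert (E1 : C * v = M * (N * v) + v) by (unfold C; ring).
    assert (E2 : del * C * E = C * (del * E)) by ring.
    lra. }
assert (HFt := Hmin t x Ht0 (Rle_refl t) (proj1 Hx) (proj2 Hx)).
unfold F in HFt, HFt0.
assert (0 < del * exp (- C * t)) by (apply Rmult_lt_0_compat; [exact Hdel | apply exp_pos]).
lra.
Qed.

Theorem lemma4p3 (n : nat) (a p q : R) (upp : R -> R) (T : Rbar)
  (f : R -> R -> R) :
  (3 <= n)%nat ->
  1 < a ->
  (* u'' : smooth, positive on (1,a), vanishing at the endpoints *)
  smooth_fun upp ->
  upp 1 = 0 -> upp a = 0 ->
  (forall x, 1 < x < a -> 0 < upp x) ->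
  (* the flow exists (smoothly) on [0,T), T > 0 possibly +oo *)
  Rbar_lt 0 T ->
  smooth_before T f ->
  (forall t x, 0 < t -> Rbar_lt t T -> 1 < x < a ->
     Derive (fun s => f s x) t = lbmcf_rhs n upp (f t) x) ->
  (forall t, 0 <= t -> Rbar_lt t T -> f t 1 = q /\ f t a = p) ->
  (* supercritical phase for f_0 *)
  (forall x, 1 <= x <= a -> Theta n (f 0) x > (INR n - 2) * (PI / 2)) ->
  forall t x, 0 <= t -> Rbar_lt t T -> 1 <= x <= a -> 0 < f t x.
Proof. exact (main_part n a p q upp T f). Qed.
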